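(* Let $\Lambda_f$ be a uniformly random numerical semigroup with Frobenius number $f$, and $m(\Lambda_f)$ its multiplicity. Then for every integer $k$: \[\lim_{f\to\infty,\ f \text{ even}} \mathbb{P}[f - 2m(\Lambda_f) = 2k] = \begin{cases} C_0^{-1} 2^{k-1} & k < 0,\\ 0 & k = 0,\\ C_0^{-1} 2^{-3k-1} S(2k) & k > 0;\end{cases}\] \[\lim_{f\to\infty,\ f \text{ odd}} \mathbb{P}[f - 2m(\Lambda_f) = 2k+1] = \begin{cases} C_1^{-1} 2^{(2k-1)/2} & k < 0,\\ C_1^{-1} 2^{-(6k+5)/2} S(2k+1) & k \geq 0.\end{cases}\]
   Context: A numerical semigroup is a subset $\Lambda \subseteq \mathbb{N}_0$ containing $0$, closed under addition, with finite complement; its multiplicity is $\min(\Lambda\setminus\{0\})$, its conductor is the least $c$ with $c + \mathbb{N}_0 \subseteq \Lambda$, and its Frobenius number is the conductor minus $1$. $\operatorname{Fr}(f)$ denotes the number of numerical semigroups with Frobenius number $f$, and $C_0 = \lim_{f\ \text{even}} 2^{-f/2}\operatorname{Fr}(f)$, $C_1 = \lim_{f\ \text{odd}} 2^{-f/2}\operatorname{Fr}(f)$ (these limits exist and are positive constants, by Backelin). For $j \geq 1$, $S(j)$ is the number of numerical semigroups with multiplicity $j+1$ and Frobenius number $3j+2$. *)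

(* Defs.v *)
From Stdlib Require Import Reals ClassicalEpsilon ZArith.
From Coquelicot Require Import Coquelicot.
From mathcomp Require Import all_boot.

Set Implicit Arguments.
Unset Strict Implicit.
Unset Printing Implicit Defensive.

Definition is_numerical_semigroup (L : nat -> Prop) : Prop :=
  L 0%N /\ (forall x y, L x -> L y -> L (x + y)%N) /\
  (exists N, forall n, (N <= n)%N -> L n).

Definition is_conductor (L : nat -> Prop) (c : nat) : Prop :=
  (forall n, (c <= n)%N -> L n) /\
  (forall c', (forall n, (c' <= n)%N -> L n) -> (c <= c')%N).

(* Frobenius number f (f a natural number) = conductor - 1, i.e. conductor = f+1 *)
Definition has_frobenius (L : nat -> Prop) (f : nat) : Prop := is_conductor L f.+1.

Definition is_multiplicity (L : nat -> Prop) (m : nat) : Prop :=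
  (0 < m)%N /\ L m /\ (forall n, (0 < n)%N -> L n -> (m <= n)%N).

(* Every numerical semigroup with Frobenius number f is of this form for a
   unique T (namely its trace on [0,f]), so counting the T below counts
   numerical semigroups with Frobenius number f. *)
Definition of_trunc (f : nat) (T : {set 'I_f.+1}) : nat -> Prop :=
  fun n => (f < n)%N \/ exists i : 'I_f.+1, nat_of_ord i = n /\ i \in T.

Definition pb (P : Prop) : bool := if excluded_middle_informative P then true else false.

Definition NSFr (f : nat) (Q : (nat -> Prop) -> Prop) : nat :=
  #|[set T : {set 'I_f.+1} |
      pb (is_numerical_semigroup (of_trunc T) /\ has_frobenius (of_trunc T) f
          /\ Q (of_trunc T))]|.

Definition Fr (f : nat) : nat := NSFr f (fun _ => True).

Definition S (j : nat) : nat := NSFr (3 * j + 2)%N (fun L => is_multiplicity L j.+1).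

Definition Prob (f : nat) (Q : (nat -> Prop) -> Prop) : R :=
  (INR (NSFr f Q) / INR (Fr f))%R.

Definition ev_diff (f : nat) (d : Z) : (nat -> Prop) -> Prop :=
  fun L => exists m, is_multiplicity L m /\ (Z.of_nat f - 2 * Z.of_nat m = d)%Z.

(* Main.v *)
Require Import Defs.
From Stdlib Require Import Reals ZArith.
From Coquelicot Require Import Coquelicot.
From mathcomp Require Import all_boot.
From Stdlib Require Import Lia Lra ClassicalEpsilon.
From mathcomp Require Import zify.
Set Warnings "-notation-overridden -ambiguous-paths".

Section Comb.
Set Implicit Arguments. Unset Strict Implicit.
Local Open Scope nat_scope.

Definition tn n (T : {set 'I_n}) (x : nat) : bool := [exists i in T, val i == x].

Lemma tn_val n (T : {set 'I_n}) (i : 'I_n) : tn T (nat_of_ord i) = (i \in T).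
Proof.
apply/existsP/idP => [[j /andP[jT /eqP ji]]|iT].
  by have -> : i = j by apply: val_inj.
by exists i; rewrite iT eqxx.
Qed.

Lemma tnP n (T : {set 'I_n}) x : tn T x <-> exists i, i \in T /\ nat_of_ord i = x.
Proof.
split => [/existsP[i /andP[iT /eqP <-]]|[i [iT <-]]]; first by exists i.
by rewrite tn_val.
Qed.

Lemma tn_lt n (T : {set 'I_n}) x : tn T x -> x < n.
Proof. by move/tnP=> [i [_ <-]]; apply: ltn_ord. Qed.

Lemma pb_eq (P Q : Prop) : (P <-> Q) -> pb P = pb Q.
Proof.
rewrite /pb => H; case: (excluded_middle_informative P) => p; case: (excluded_middle_informative Q) => q //; exfalso; tauto.
Qed.

Lemma pbP (P : Prop) : pb P <-> P.
Proof. rewrite /pb; case: (excluded_middle_informative P) => //; split => //. Qed.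

Lemma of_truncE f (T : {set 'I_f.+1}) n : of_trunc T n <-> (f < n) \/ tn T n.
Proof.
rewrite /of_trunc; split => [[H|[i [<- iT]]]|[H|/tnP[i [iT <-]]]]; auto.
- by right; rewrite tn_val.
- by right; exists i.
Qed.

Definition good (f m : nat) (s : nat -> bool) : Prop :=
  s 0 /\ ~~ s f /\ (forall x y, s x -> s y -> x + y <= f -> s (x + y)) /\
  0 < m /\ s m /\ (forall x, 0 < x < m -> ~~ s x).

Lemma goodE f m (T : {set 'I_f.+1}) : m <= f ->
  (is_numerical_semigroup (of_trunc T) /\ has_frobenius (of_trunc T) f /\
   is_multiplicity (of_trunc T) m) <-> good f m (tn T).
Proof.
move=> mf; split.
- move=> [[L0 [Ladd _]] [[_ Cmin] [m0 [Lm Lmin]]]].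
  have tf : ~~ tn T f.
    apply/negP => tf.
    suff : f < f by rewrite ltnn.
    apply: Cmin => n fn.
    apply/of_truncE; move: fn; rewrite leq_eqVlt => /orP[/eqP<-|]; auto.
  move/of_truncE: L0 => [//|L0].
  move/of_truncE: Lm => [|Lm]; first by rewrite ltnNge mf.
  split=> //; split=> //; split.
    move=> x y tx ty xy.
    have := Ladd x y; rewrite !of_truncE => H.
    case: H; [by right|by right|by rewrite ltnNge xy|by []].
  split=> //; split=> // x /andP[x0 xm]; apply/negP => tx.
  have := Lmin x x0; rewrite of_truncE => H.
  have : m <= x by apply: H; right.
  by rewrite leqNgt xm.
- move=> [t0 [tf [tadd [m0 [tm tmin]]]]].
  split; [split; [|split]|split].
  + by apply/of_truncE; right.
  + move=> x y; rewrite !of_truncE => [][Hx|Hx] [Hy|Hy]; try (left; lia).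
    case: (leqP (x + y) f) => H; [right; exact: tadd | by left].
  + by exists f.+1 => n fn; apply/of_truncE; left.
  + split; first by move=> n fn; apply/of_truncE; left.
    move=> c Hc; rewrite ltnNge; apply/negP => cf.
    move: (Hc f cf); rewrite of_truncE ltnn => [][//|]; by rewrite (negbTE tf).
  + split=> //; split; first by apply/of_truncE; right.
    move=> n n0; rewrite of_truncE => [][H|H]; first lia.
    rewrite leqNgt; apply/negP => nm.
    by move: (tmin n); rewrite n0 nm H => /(_ isT).
Qed.

Definition cnt f m := #|[set T : {set 'I_f.+1} | pb (good f m (tn T))]|.

Lemma NSFr_cnt f m (d : Z) : 0 < m <= f -> (Z.of_nat f - 2 * Z.of_nat m = d)%Z ->
  NSFr f (ev_diff f d) = cnt f m.
Proof.
move=> /andP[m0 mf] Hd; rewrite /NSFr /cnt; apply: eq_card => T; rewrite !inE.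
apply: pb_eq; rewrite -goodE //; split.
- move=> [A [B [m' [C D]]]]; have <- : m' = m by lia.
  by [].
- move=> [A [B C]]; split=> //; split=> //; by exists m.
Qed.

Lemma NSFr_le f Q : NSFr f Q <= Fr f.
Proof.
apply: subset_leq_card; apply/subsetP => T; rewrite !inE => /pbP [a [b _]].
by apply/pbP.
Qed.

Lemma S_cnt d : S d = cnt (3 * d + 2) d.+1.
Proof.
rewrite /S /NSFr /cnt; apply: eq_card => T; rewrite !inE.
apply: pb_eq; rewrite -goodE; [tauto | lia].
Qed.

Definition addp n (p : 'I_n) (b : bool) : {set 'I_n} := if b then [set p] else set0.

Lemma double_card n n' (g : 'I_n -> 'I_n') (p : 'I_n') (P : {set 'I_n} -> bool)
  (P' : {set 'I_n'} -> bool) :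
  injective g -> (forall i, g i != p) ->
  (forall (T' : {set 'I_n'}) x, P' T' -> x \in T' -> x != p -> exists i, g i = x) ->
  (forall (T : {set 'I_n}) b, P' (g @: T :|: addp p b) = P T) ->
  #|[set T' | P' T']| = 2 * #|[set T | P T]|.
Proof.
move=> ginj gp Hsurj HP.
pose h (Tb : {set 'I_n} * bool) := g @: Tb.1 :|: addp p Tb.2.
have gnot : forall T : {set 'I_n}, p \notin g @: T.
  move=> T; apply/negP => /imsetP [i _ /eqP]; by rewrite eq_sym (negbTE (gp i)).
have pin : forall (T : {set 'I_n}) b, (p \in h (T, b)) = b.
  move=> T b; rewrite /h /addp inE (negbTE (gnot T)); case: b; by rewrite ?inE ?eqxx.
have hrem : forall (T : {set 'I_n}) b, h (T, b) :\ p = g @: T.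
  move=> T b; apply/setP => x; rewrite /h /addp !inE.
  case: (x =P p) => [->|/eqP xp] /=.
    by rewrite (negbTE (gnot T)).
  by case: b; rewrite ?inE ?orbF // (negbTE xp) orbF.
have hinj : injective h.
  move=> [T1 b1] [T2 b2] E.
  have eb : b1 = b2 by rewrite -(pin T1 b1) -(pin T2 b2) E.
  have : g @: T1 = g @: T2 by rewrite -(hrem T1 b1) -(hrem T2 b2) E.
  by move/(imset_inj ginj) => ->; rewrite eb.
have -> : [set T' | P' T'] = h @: setX [set T | P T] setT.
  apply/setP => T'; rewrite inE; apply/idP/imsetP.
  - move=> PT'.
    have ET : T' = h (g @^-1: T', p \in T').
      apply/setP => x; rewrite /h /addp /=.
      case pT: (p \in T'); rewrite !inE.
      - case: (x =P p) => [->|xp] /=; first by rewrite pT orbT.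
        rewrite orbF; apply/idP/imsetP.
          move=> xT; have [i gi] := Hsurj T' x PT' xT (introN eqP xp).
          by exists i; rewrite // inE gi.
        by move=> [i]; rewrite inE => gT ->.
      - rewrite orbF; apply/idP/imsetP.
          move=> xT; have xp : x != p by apply/eqP => E; rewrite -E xT in pT.
          have [i gi] := Hsurj T' x PT' xT xp.
          by exists i; rewrite // inE gi.
        by move=> [i]; rewrite inE => gT ->.
    exists (g @^-1: T', p \in T') => //.
    by rewrite !inE andbT -(HP _ (p \in T')); move: PT'; rewrite {1}ET.
  - move=> [[T b]]; rewrite !inE andbT => PT ->; by rewrite /h /= HP.
by rewrite (card_imset _ hinj) cardsX cardsT card_bool mulnC.
Qed.

Lemma tn_img n n' (g : 'I_n -> 'I_n') (G : nat -> nat) (p : 'I_n') (T : {set 'I_n}) b x :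
  (forall i, nat_of_ord (g i) = G (nat_of_ord i)) ->
  tn (g @: T :|: addp p b) x <-> (exists y, tn T y /\ G y = x) \/ (b /\ x = nat_of_ord p).
Proof.
move=> gG; split.
- move/tnP => [i [iT <-]]; move: iT; rewrite inE => /orP[/imsetP[j jT ->]|].
    by left; exists (nat_of_ord j); rewrite tn_val gG.
  by rewrite /addp; case: b; rewrite ?inE // => /eqP ->; right.
- move=> [[y [/tnP[j [jT <-]] <-]]|[bt ->]]; rewrite -?gG tn_val inE.
    by rewrite (imset_f g jT).
  by rewrite /addp bt inE eqxx orbT.
Qed.

Lemma close_triv F m (s : nat -> bool) : (forall x, 0 < x < m -> ~~ s x) -> F < 2 * m ->
  forall x y, s x -> s y -> x + y <= F -> s (x + y).
Proof.
move=> Hmin HF x y sx sy xy.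
case: (posnP x) => [x0|xp]; first by rewrite x0 add0n.
case: (posnP y) => [y0|yp]; first by rewrite y0 addn0.
have xm : m <= x.
  rewrite leqNgt; apply/negP => xm; by move: (Hmin x); rewrite xp xm sx => /(_ isT).
have ym : m <= y.
  rewrite leqNgt; apply/negP => ym; by move: (Hmin y); rewrite yp ym sy => /(_ isT).
lia.
Qed.

Lemma goodA f m (s s' : nat -> bool) (b : bool) : 1 < m -> m < f -> f.+1 < 2 * m ->
  (forall x, s' x <-> (x < f /\ s x) \/ (x = f.+1 /\ s f) \/ (b /\ x = f)) ->
  good f.+1 m s' <-> good f m s.
Proof.
move=> m1 mf fm hs'; split.
- move=> [H0 [Hf [_ [m0 [Hm Hmin]]]]].
  have Hmin' : forall x, 0 < x < m -> ~~ s x.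
    move=> x /andP[x0 xm]; apply/negP => sx.
    have : s' x by apply/hs'; left; split=> //; lia.
    by move: (Hmin x); rewrite x0 xm => /(_ isT) /negbTE ->.
  split; [|split; [|split; [|split; [|split]]]] => //.
  + by move/hs': H0 => [[? ?]|[[? ?]|[? ?]]] //; lia.
  + apply/negP => sf; move/negP: Hf; apply; apply/hs'; by right; left.
  + by apply: (close_triv (F := _) Hmin'); lia.
  + by move/hs': Hm => [[? ?]|[[? ?]|[? ?]]] //; lia.
- move=> [H0 [Hf [_ [m0 [Hm Hmin]]]]].
  have Hmin' : forall x, 0 < x < m -> ~~ s' x.
    move=> x /andP[x0 xm]; apply/negP => /hs' [[_ sx]|[[? ?]|[? ?]]]; try lia.
    by move: (Hmin x); rewrite x0 xm sx => /(_ isT).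
  split; [|split; [|split; [|split; [|split]]]] => //.
  + apply/hs'; left; split=> //; lia.
  + apply/negP => /hs' [[? ?]|[[_ sf]|[? ?]]]; try lia.
  + by apply: (close_triv (F := _) Hmin'); lia.
  + apply/hs'; left; split=> //.
Qed.

Definition GA f y := if y < f then y else f.+1.

Lemma cnt_stepA f m : 1 < m -> m < f -> f.+1 < 2 * m -> cnt f.+1 m = 2 * cnt f m.
Proof.
move=> m1 mf fm.
pose g (i : 'I_f.+1) : 'I_f.+2 := inord (GA f i).
have gG : forall i, nat_of_ord (g i) = GA f (nat_of_ord i).
  move=> i; rewrite /g /= inordK // /GA; have := ltn_ord i; case: ifP => _; lia.
pose p : 'I_f.+2 := inord f.
have pv : nat_of_ord p = f by rewrite /p /= inordK.
rewrite /cnt; apply: (@double_card _ _ g p).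
- move=> i j E; apply: ord_inj; move: (congr1 (@nat_of_ord _) E); rewrite !gG /GA.
  have := ltn_ord i; have := ltn_ord j.
  case: (ltnP i f) => ?; case: (ltnP j f) => ?; lia.
- move=> i; apply/eqP => /(congr1 (@nat_of_ord _)); rewrite gG pv /GA.
  case: (ltnP i f) => ?; lia.
- move=> T' x _ _ xp.
  have xv : nat_of_ord x != f by apply: contra xp => /eqP xf; apply/eqP/ord_inj; rewrite pv.
  have := ltn_ord x => xlt.
  case: (ltnP (nat_of_ord x) f) => xf.
    exists (inord (nat_of_ord x)); apply: ord_inj; rewrite gG inordK /GA ?xf //; lia.
  exists (inord f); apply: ord_inj; rewrite gG inordK /GA ?ltnn //; lia.
- move=> T b; apply: pb_eq; apply: (goodA (b := b)) => // x.
  rewrite (tn_img _ _ _ _ gG) pv; split.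
  + move=> [[y [sy <-]]|[]]; last by auto.
    have := tn_lt sy; rewrite /GA; case: ifP => yf ylt.
      by left.
    have yf2 : y = f by lia.
    by subst y; right; left.
  + case=> [[xf sx]|[[xe sf]|[bb xe]]].
    * by left; exists x; rewrite /GA xf.
    * by left; exists f; rewrite /GA ltnn xe.
    * by right; split.
Qed.

Lemma goodD f m (s s' : nat -> bool) (b : bool) : 2 * m <= f -> f < 3 * m ->
  (forall x, s' x <-> (x < m /\ s x) \/ (m < x <= 2 * m /\ s (x - 1)) \/
                     (2 * m + 2 <= x /\ s (x - 2)) \/ (b /\ x = 2 * m + 1)) ->
  good f.+2 m.+1 s' <-> good f m s.
Proof.
move=> fm1 fm2 hs'; have m0 : 0 < m by lia.
split.
- move=> [H0 [Hf [Hcl [_ [Hm Hmin']]]]].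
  have Hmin : forall x, 0 < x < m -> ~~ s x.
    move=> x /andP[x0 xm]; apply/negP => sx.
    have : s' x by apply/hs'; left; split=> //.
    by move: (Hmin' x); rewrite x0 /= ltnS (ltnW xm) => /(_ isT) /negbTE ->.
  split; [|split; [|split; [|split; [|split]]]] => //.
  + by move/hs': H0 => [[? ?]|[[? ?]|[[? ?]|[? ?]]]] //; lia.
  + apply/negP => sf; move/negP: Hf; apply; apply/hs'; right; right; left.
    split; first lia. by have -> : f.+2 - 2 = f by lia.
  + move=> x y sx sy xy.
    case: (posnP x) => [x0|xp]; first by rewrite x0 add0n.
    case: (posnP y) => [y0|yp]; first by rewrite y0 addn0.
    have xm : m <= x.
      rewrite leqNgt; apply/negP => xm; by move: (Hmin x); rewrite xp xm sx => /(_ isT).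
    have ym : m <= y.
      rewrite leqNgt; apply/negP => ym; by move: (Hmin y); rewrite yp ym sy => /(_ isT).
    have sx' : s' x.+1.
      apply/hs'; right; left; split; first lia. by rewrite subn1.
    have sy' : s' y.+1.
      apply/hs'; right; left; split; first lia. by rewrite subn1.
    have := Hcl _ _ sx' sy'; rewrite -/(addn _ _).
    have -> : x.+1 + y.+1 <= f.+2 by lia.
    move=> /(_ isT) /hs' [[? ?]|[[? ?]|[[? H]|[? ?]]]]; try lia.
    by have <- : x.+1 + y.+1 - 2 = x + y by lia.
  + by move/hs': Hm => [[? ?]|[[? H]|[[? ?]|[? ?]]]]; try lia; rewrite subn1 in H.
- move=> [H0 [Hf [Hcl [_ [Hm Hmin]]]]].
  have Hmin' : forall x, 0 < x < m.+1 -> ~~ s' x.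
    move=> x /andP[x0 xm]; apply/negP => /hs' [[xm' sx]|[[? ?]|[[? ?]|[? ?]]]]; try lia.
    by move: (Hmin x); rewrite x0 xm' sx => /(_ isT).
  split; [|split; [|split; [|split; [|split]]]] => //.
  + by apply/hs'; left.
  + apply/negP => /hs' [[? ?]|[[? ?]|[[? H]|[? ?]]]]; try lia.
    have e : f.+2 - 2 = f by lia.
    by rewrite e in H; rewrite H in Hf.
  + move=> x y sx sy xy.
    case: (posnP x) => [x0|xp]; first by rewrite x0 add0n.
    case: (posnP y) => [y0|yp]; first by rewrite y0 addn0.
    have xm : m < x.
      rewrite ltnNge; apply/negP => xm; by move: (Hmin' x); rewrite xp ltnS xm sx => /(_ isT).
    have ym : m < y.
      rewrite ltnNge; apply/negP => ym; by move: (Hmin' y); rewrite yp ltnS ym sy => /(_ isT).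
    have sx1 : s (x - 1).
      by move/hs': sx => [[? ?]|[[? ?]|[[? ?]|[? ?]]]] //; lia.
    have sy1 : s (y - 1).
      by move/hs': sy => [[? ?]|[[? ?]|[[? ?]|[? ?]]]] //; lia.
    have := Hcl _ _ sx1 sy1; have -> : x - 1 + (y - 1) <= f by lia.
    move=> /(_ isT) H; apply/hs'; right; right; left; split; first lia.
    by have -> : x + y - 2 = x - 1 + (y - 1) by lia.
  + apply/hs'; right; left; split; first lia. by rewrite subn1.
Qed.

Definition GD m y := if y < m then y else if y < 2 * m then y.+1 else y.+2.

Lemma cnt_stepD f m : 2 * m <= f -> f < 3 * m -> cnt f.+2 m.+1 = 2 * cnt f m.
Proof.
move=> fm1 fm2; have m0 : 0 < m by lia.
pose g (i : 'I_f.+1) : 'I_f.+3 := inord (GD m i).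
have gG : forall i, nat_of_ord (g i) = GD m (nat_of_ord i).
  move=> i; rewrite /g /= inordK // /GD; have := ltn_ord i.
  case: (ltnP i m) => ?; case: (ltnP i (2 * m)) => ?; lia.
pose p : 'I_f.+3 := inord (2 * m).+1.
have pv : nat_of_ord p = (2 * m).+1 by rewrite /p /= inordK //; lia.
rewrite /cnt; apply: (@double_card _ _ g p).
- move=> i j E; apply: ord_inj; move: (congr1 (@nat_of_ord _) E); rewrite !gG /GD.
  have := ltn_ord i; have := ltn_ord j.
  case: (ltnP i m) => ?; case: (ltnP i (2 * m)) => ?;
  case: (ltnP j m) => ?; case: (ltnP j (2 * m)) => ?; lia.
- move=> i; apply/eqP => /(congr1 (@nat_of_ord _)); rewrite gG pv /GD.
  case: (ltnP i m) => ?; case: (ltnP i (2 * m)) => ?; lia.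
- move=> T' x /pbP [_ [_ [_ [_ [_ Hmin']]]]] xT xp.
  have xv : nat_of_ord x != (2 * m).+1.
    by apply: contra xp => /eqP xf; apply/eqP/ord_inj; rewrite pv.
  have xm : nat_of_ord x != m.
    apply/eqP => xm; move: (Hmin' m); rewrite m0 ltnSn -xm tn_val xT.
    by move=> /(_ isT).
  have := ltn_ord x => xlt.
  case: (ltnP (nat_of_ord x) m) => x1.
    exists (inord (nat_of_ord x)); apply: ord_inj; rewrite gG inordK /GD ?x1 //; lia.
  case: (ltnP (nat_of_ord x) (2 * m).+1) => x2.
    exists (inord (nat_of_ord x).-1); apply: ord_inj; rewrite gG inordK /GD; last lia.
    case: ifP => ?; first lia. case: ifP => ?; lia.
  exists (inord (nat_of_ord x).-2); apply: ord_inj; rewrite gG inordK /GD; last lia.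
  case: ifP => ?; first lia. case: ifP => ?; lia.
- move=> T b; apply: pb_eq; apply: (goodD (b := b)) => // x.
  rewrite (tn_img _ _ _ _ gG) pv; split.
  + case=> [[y [sy <-]]|[bb xe]]; last by right; right; right; split=> //; lia.
    rewrite /GD; case: (ltnP y m) => y1; first by left.
    case: (ltnP y (2 * m)) => y2.
      by right; left; split; [lia | rewrite subn1].
    right; right; left; split; [lia | by have -> : y.+2 - 2 = y by lia].
  + case=> [[x1 sx]|[[x1 sx]|[[x1 sx]|[bb xe]]]].
    * by left; exists x; rewrite /GD x1.
    * left; exists (x - 1); split=> //; rewrite /GD.
      case: ifP => ?; first lia. case: ifP => ?; lia.
    * left; exists (x - 2); split=> //; rewrite /GD.
      case: ifP => ?; first lia. case: ifP => ?; lia.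
    * by right; split=> //; lia.
Qed.

Lemma cnt_base m : 1 < m -> cnt m.+1 m = 1.
Proof.
move=> m1.
pose T0 : {set 'I_m.+2} := [set ord0; inord m].
have T0E : forall x, tn T0 x <-> x = 0 \/ x = m.
  move=> x; rewrite tnP; split.
  - move=> [i [iT <-]]; move: iT; rewrite !inE => /orP[/eqP->|/eqP->]; first by left.
    by right; rewrite inordK //; lia.
  - move=> [->|->]; first by exists ord0; rewrite !inE eqxx.
    by exists (inord m); rewrite !inE eqxx orbT inordK //; lia.
have gT0 : good m.+1 m (tn T0).
  split; [|split; [|split; [|split; [|split]]]].
  + by apply/T0E; left.
  + by apply/negP => /T0E; lia.
  + move=> x y /T0E [->|->] /T0E [->|->] H; apply/T0E; lia.
  + lia.
  + by apply/T0E; right.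
  + by move=> x xm; apply/negP => /T0E; lia.
rewrite /cnt (_ : [set T | _] = [set T0]) ?cards1 //.
apply/setP => T; rewrite !inE; apply/idP/eqP; last by move=> ->; apply/pbP.
move=> /pbP [H0 [Hf [_ [_ [Hm Hmin]]]]].
apply/setP => i; rewrite -!tn_val.
have := ltn_ord i; move: (nat_of_ord i) => v vlt.
apply/idP/idP => H.
- apply/T0E; case: (posnP v) => v0; first by left.
  case: (ltnP v m) => vm.
    by move: (Hmin v); rewrite v0 vm H => /(_ isT).
  case: (leqP v m) => vm2; first by right; lia.
  have e : v = m.+1 by lia.
  by move: H; rewrite e => H; rewrite H in Hf.
- by move/T0E: H => [->|->].
Qed.

Lemma cnt_small m j : 1 < m -> m.+1 + j < 2 * m -> cnt (m.+1 + j) m = 2 ^ j.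
Proof.
move=> m1; elim: j => [|j IH] H; first by rewrite addn0 cnt_base.
rewrite addnS cnt_stepA //; last lia; last lia.
by rewrite IH ?expnS //; lia.
Qed.

Lemma cnt_zero m : 0 < m -> cnt (2 * m) m = 0.
Proof.
move=> m0; apply/eqP; rewrite cards_eq0; apply/eqP/setP => T; rewrite !inE.
apply/negP => /pbP [_ [Hf [Hcl [_ [Hm _]]]]].
have := Hcl _ _ Hm Hm; rewrite addnn -mul2n leqnn => /(_ isT) H.
by rewrite H in Hf.
Qed.

Lemma cnt_big d j : cnt (3 * d + 2 + 2 * j) (d.+1 + j) = 2 ^ j * cnt (3 * d + 2) d.+1.
Proof.
elim: j => [|j IH]; first by rewrite !addn0 mul1n.
have -> : 3 * d + 2 + 2 * j.+1 = (3 * d + 2 + 2 * j).+2 by lia.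
rewrite (addnS d.+1 j) cnt_stepD; [|lia|lia].
by rewrite IH expnS mulnA.
Qed.

End Comb.

Section Anal.
Local Open Scope R_scope.


Lemma INR_muln a b : INR (a * b)%N = INR a * INR b.
Proof. by rewrite -multE mult_INR. Qed.

Lemma pow2R j : INR (2 ^ j)%N = Rpower 2 (INR j).
Proof.
rewrite Rpower_pow; last lra.
elim: j => [|j IH] //=; rewrite expnS INR_muln IH /=; lra.
Qed.

Lemma INR_leq a b : (a <= b)%N -> INR a <= INR b.
Proof. by move/leP; apply: le_INR. Qed.

Lemma Rpower_pos2 x : 0 < Rpower 2 x.
Proof. rewrite /Rpower; apply: exp_pos. Qed.

Lemma lim_gen (F D u : nat -> R) (C c e e0 L : R) (N : nat) :
  is_lim_seq (fun n => F n / D n) C -> C <> 0 ->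
  (forall n, D n = Rpower 2 (INR n + e0)) ->
  (forall n, (N <= n)%N -> F n <> 0 /\ u n = c * Rpower 2 (INR n + e) / F n) ->
  L = / C * c * Rpower 2 (e - e0) ->
  is_lim_seq u L.
Proof.
move=> HF C0 HD Hu ->.
apply: (is_lim_seq_ext_loc (fun n => (c * Rpower 2 (e - e0)) / (F n / D n))).
  exists N => n /leP nN; have [Fn ->] := Hu n nN.
  rewrite HD.
  have -> : Rpower 2 (INR n + e) = Rpower 2 (e - e0) * Rpower 2 (INR n + e0).
    rewrite -Rpower_plus; f_equal; ring.
  have := Rpower_pos2 (INR n + e0); have := Rpower_pos2 (e - e0) => p1 p2.
  field; split; lra.
have := is_lim_seq_div' (fun _ => c * Rpower 2 (e - e0)) _ _ C (is_lim_seq_const _) HF C0.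
by have -> : c * Rpower 2 (e - e0) / C = / C * c * Rpower 2 (e - e0) by field.
Qed.

Lemma lowb (F D : nat -> R) (C e e0 : R) (N : nat) :
  is_lim_seq (fun n => F n / D n) C ->
  (forall n, D n = Rpower 2 (INR n + e0)) ->
  (forall n, (N <= n)%N -> Rpower 2 (INR n + e) <= F n) -> C <> 0.
Proof.
move=> HF HD Hl.
have : Rbar_le (Rpower 2 (e - e0)) C.
  apply: (is_lim_seq_le_loc (fun _ => Rpower 2 (e - e0))) HF; last exact: is_lim_seq_const.
  exists N => n /leP nN; rewrite HD.
  have := Rpower_pos2 (INR n + e0) => p.
  apply: (Rmult_le_reg_r (Rpower 2 (INR n + e0))) => //.
  rewrite /Rdiv Rmult_assoc Rinv_l; last lra.
  rewrite -Rpower_plus Rmult_1_r.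
  have -> : e - e0 + (INR n + e0) = INR n + e by ring.
  exact: Hl.
have := Rpower_pos2 (e - e0) => /= p H; lra.
Qed.

Lemma case_help f Q j n e (c : nat) : NSFr f Q = (2 ^ j * c)%N -> INR j = INR n + e ->
  Prob f Q = INR c * Rpower 2 (INR n + e) / INR (Fr f).
Proof. move=> H Hj; rewrite /Prob H INR_muln pow2R Hj /Rdiv; ring. Qed.

Lemma Fr_even n : (2 <= n)%N -> (2 ^ (n - 2) <= Fr (2 * n))%N.
Proof.
move=> n2; apply: leq_trans (NSFr_le _ (ev_diff (2 * n) (-2)%Z)).
rewrite (NSFr_cnt (m := n.+1)); [|lia|lia].
have -> : (2 * n = n.+2 + (n - 2))%N by lia.
rewrite cnt_small //; lia.
Qed.

Lemma Fr_odd n : (1 <= n)%N -> (2 ^ (n - 1) <= Fr (2 * n + 1))%N.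
Proof.
move=> n2; apply: leq_trans (NSFr_le _ (ev_diff (2 * n + 1) (-1)%Z)).
rewrite (NSFr_cnt (m := n.+1)); [|lia|lia].
have -> : (2 * n + 1 = n.+2 + (n - 1))%N by lia.
rewrite cnt_small //; lia.
Qed.

Lemma INR_Z a b n : (Z.of_nat a = Z.of_nat n + b)%Z -> INR a = INR n + IZR b.
Proof. move=> H; rewrite !INR_IZR_INZ -plus_IZR H //. Qed.

Lemma Fr_nz f x : (2 ^ x <= Fr f)%N -> INR (Fr f) <> 0.
Proof.
move=> H; apply: not_0_INR; have : (0 < Fr f)%N by apply: leq_trans H; rewrite expn_gt0.
lia.
Qed.

End Anal.

Unset Implicit Arguments.
Local Open Scope R_scope.


Lemma INR_addn a b : INR (a + b)%N = INR a + INR b.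
Proof. by rewrite -plusE plus_INR. Qed.

Theorem theorem5p1 (C0 C1 : R)
  (HC0 : is_lim_seq (fun n : nat => (INR (Fr (2 * n)%nat) / Rpower 2 (INR (2 * n)%nat / 2))) (Rbar.Finite C0))
  (HC1 : is_lim_seq (fun n : nat => (INR (Fr (2 * n + 1)%nat) / Rpower 2 (INR (2 * n + 1)%nat / 2))) (Rbar.Finite C1))
  (k : Z) :
  is_lim_seq (fun n : nat => Prob (2 * n)%nat (ev_diff (2 * n)%nat (2 * k)%Z))
    (Rbar.Finite (if (k <? 0)%Z then (/ C0 * Rpower 2 (IZR (k - 1)))
     else if (k =? 0)%Z then 0
     else (/ C0 * Rpower 2 (IZR (- 3 * k - 1)) * INR (S (Z.to_nat (2 * k))))))
  /\
  is_lim_seq (fun n : nat => Prob (2 * n + 1)%nat (ev_diff (2 * n + 1)%nat (2 * k + 1)%Z))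
    (Rbar.Finite (if (k <? 0)%Z then (/ C1 * Rpower 2 (IZR (2 * k - 1) / 2))
     else (/ C1 * Rpower 2 (- IZR (6 * k + 5) / 2) * INR (S (Z.to_nat (2 * k + 1)))))).
Proof.
have DE : forall n, Rpower 2 (INR (2 * n)%nat / 2) = Rpower 2 (INR n + 0).
  move=> n; f_equal; rewrite INR_muln /=; lra.
have DO : forall n, Rpower 2 (INR (2 * n + 1)%nat / 2) = Rpower 2 (INR n + /2).
  move=> n; f_equal; rewrite INR_addn INR_muln /=; lra.
have C0nz : C0 <> 0.
  apply: (lowb (e := IZR (-2)) (N := 2%N) HC0 DE) => n n2.
  rewrite -(INR_Z (a := (n - 2)%N)); last lia.
  by rewrite -pow2R; apply: INR_leq; apply: Fr_even.
have C1nz : C1 <> 0.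
  apply: (lowb (e := IZR (-1)) (N := 1%N) HC1 DO) => n n2.
  rewrite -(INR_Z (a := (n - 1)%N)); last lia.
  by rewrite -pow2R; apply: INR_leq; apply: Fr_odd.
split.
- case: (Z.ltb_spec k 0) => hk; cbv beta iota.
  + have [K [eK K1]] : exists K, k = (- Z.of_nat K)%Z /\ (1 <= K)%N.
      by exists (Z.to_nat (-k)); split; lia.
    subst k.
    apply: (lim_gen (c := INR 1) (e := IZR (- Z.of_nat K - 1)) (N := K.+2) HC0 C0nz DE).
    * move=> n nK; split; first by apply: (@Fr_nz _ (n-2)%N); apply: Fr_even; lia.
      apply: (case_help (j := (n - K - 1)%N)); last by apply: INR_Z; lia.
      rewrite muln1 (NSFr_cnt (m := (n + K)%N)); [|lia|lia].
      have -> : (2 * n = (n + K).+1 + (n - K - 1))%N by lia.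
      rewrite cnt_small //; lia.
    * rewrite Rminus_0_r /=; ring.
  + case: (Z.eqb_spec k 0) => hk0; cbv beta iota.
    * subst k.
      apply: (is_lim_seq_ext_loc (fun _ => 0)); last exact: is_lim_seq_const.
      exists 1%N => n /leP n1.
      rewrite /Prob (NSFr_cnt (m := n)); [|lia|lia].
      by rewrite cnt_zero /= /Rdiv ?Rmult_0_l //; lia.
    * have [K [eK K1]] : exists K, k = Z.of_nat K /\ (1 <= K)%N.
        by exists (Z.to_nat k); split; lia.
      subst k.
      apply: (lim_gen (c := INR (S (Z.to_nat (2 * Z.of_nat K))))
                (e := IZR (- 3 * Z.of_nat K - 1)) (N := (3 * K + 2)%N) HC0 C0nz DE).
      -- move=> n nK; split; first by apply: (@Fr_nz _ (n-2)%N); apply: Fr_even; lia.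
         apply: (case_help (j := (n - 3 * K - 1)%N)); last by apply: INR_Z; lia.
         have -> : Z.to_nat (2 * Z.of_nat K) = (2 * K)%N by lia.
         rewrite (NSFr_cnt (m := (n - K)%N)); [|lia|lia].
         have -> : (2 * n = 3 * (2 * K) + 2 + 2 * (n - 3 * K - 1))%N by lia.
         have -> : (n - K = (2 * K).+1 + (n - 3 * K - 1))%N by lia.
         by rewrite cnt_big S_cnt.
      -- rewrite Rminus_0_r; ring.
- case: (Z.ltb_spec k 0) => hk; cbv beta iota.
  + have [K [eK K1]] : exists K, k = (- Z.of_nat K)%Z /\ (1 <= K)%N.
      by exists (Z.to_nat (-k)); split; lia.
    subst k.
    apply: (lim_gen (c := INR 1) (e := IZR (- Z.of_nat K)) (N := K.+2) HC1 C1nz DO).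
    * move=> n nK; split; first by apply: (@Fr_nz _ (n-1)%N); apply: Fr_odd; lia.
      apply: (case_help (j := (n - K)%N)); last by apply: INR_Z; lia.
      rewrite muln1 (NSFr_cnt (m := (n + K)%N)); [|lia|lia].
      have -> : (2 * n + 1 = (n + K).+1 + (n - K))%N by lia.
      rewrite cnt_small //; lia.
    * have -> : IZR (2 * - Z.of_nat K - 1) / 2 = IZR (- Z.of_nat K) - /2.
        rewrite minus_IZR mult_IZR; field.
      rewrite /=; ring.
  + have [K eK] : exists K, k = Z.of_nat K by exists (Z.to_nat k); lia.
    subst k.
    apply: (lim_gen (c := INR (S (Z.to_nat (2 * Z.of_nat K + 1))))
              (e := IZR (- 3 * Z.of_nat K - 2)) (N := (3 * K + 3)%N) HC1 C1nz DO).
    * move=> n nK; split; first by apply: (@Fr_nz _ (n-1)%N); apply: Fr_odd; lia.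
      apply: (case_help (j := (n - 3 * K - 2)%N)); last by apply: INR_Z; lia.
      have -> : Z.to_nat (2 * Z.of_nat K + 1) = (2 * K + 1)%N by lia.
      rewrite (NSFr_cnt (m := (n - K)%N)); [|lia|lia].
      have -> : (2 * n + 1 = 3 * (2 * K + 1) + 2 + 2 * (n - 3 * K - 2))%N by lia.
      have -> : (n - K = (2 * K + 1).+1 + (n - 3 * K - 2))%N by lia.
      by rewrite cnt_big S_cnt.
    * have -> : - IZR (6 * Z.of_nat K + 5) / 2 = IZR (- 3 * Z.of_nat K - 2) - /2.
        rewrite minus_IZR plus_IZR !mult_IZR; field.
      ring.
Qed.
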